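(* Let $C>0$ be a constant. There is a constant $C'>0$, depending only on $C$, such that the following holds. Let $n\ge 1$, let $P\in\mathbb{R}^{n\times n}$ be a matrix with non-negative entries, and let $w,v\in\mathbb{R}^n$ satisfy $\|w\|_\infty\le C n^{-1/2}$ and $\|v\|_\infty\le C n^{-1/2}$. Define $$L(w,v)=\langle w,Pv\rangle-\sum_{i=1}^n\log\Big(\sum_{j=1}^n\exp(w_iv_j)\Big).$$ Then $$\left| L(w,v)-\left(\langle w,Pv\rangle-\frac1n\Big(\sum_{i=1}^n w_i\Big)\Big(\sum_{j=1}^n v_j\Big)-\frac1n\sum_{i,j=1}^n\frac{w_i^2v_j^2}{2}-n\log n\right)\right|\le \frac{C'}{n}.$$
   Context: $\langle\cdot,\cdot\rangle$ is the standard inner product on $\mathbb{R}^n$ and $\|\cdot\|_\infty$ the maximum norm. The paper states the hypothesis as $\|v\|_\infty,\|w\|_\infty\lesssim n^{-1/2}$ and the conclusion with an error term $\mathcal{O}(n^{-1})$, where $\lesssim$ and $\mathcal{O}$ hide constants depending only on the implicit constant in the hypothesis. *)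

(* Defs.v *)
From HB Require Import structures.
From mathcomp Require Import all_boot all_order all_algebra.
From mathcomp Require Import all_classical all_reals all_analysis.
Set Implicit Arguments. Unset Strict Implicit. Unset Printing Implicit Defensive.
Import Order.TTheory GRing.Theory Num.Theory.
Local Open Scope ring_scope.

Definition inner_Pv (R : realType) (n : nat) (P : 'M[R]_n) (w v : 'I_n -> R) : R :=
  \sum_(i < n) w i * (\sum_(j < n) P i j * v j).

Definition Lwv (R : realType) (n : nat) (P : 'M[R]_n) (w v : 'I_n -> R) : R :=
  inner_Pv P w v - \sum_(i < n) ln (\sum_(j < n) expR (w i * v j)).

Definition Lapprox (R : realType) (n : nat) (P : 'M[R]_n) (w v : 'I_n -> R) : R :=
  inner_Pv P w v
  - n%:R^-1 * (\sum_(i < n) w i) * (\sum_(j < n) v j)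
  - n%:R^-1 * (\sum_(i < n) \sum_(j < n) (w i ^+ 2 * v j ^+ 2) / 2)
  - n%:R * ln n%:R.

(* Main.v *)
Require Import Defs.
From HB Require Import structures.
From mathcomp Require Import all_boot all_order all_algebra.
From mathcomp Require Import all_classical all_reals all_analysis.
From mathcomp Require Import ring lra.
Import Order.TTheory GRing.Theory Num.Theory.
Local Open Scope ring_scope.

Lemma ln_le_sub1 (R : realType) (y : R) : 0 < y -> ln y <= y - 1.
Proof.
move=> y0; have := expR_ge1Dx (ln y); rewrite lnK ?posrE //; lra.
Qed.

Arguments ln_le_sub1 {R y}.
Lemma ln_bound (R : realType) (y : R) : 0 < y ->
  `|ln y - (y - 1)| <= (y - 1) ^+ 2 / y.
Proof.
move=> y0.
have h1 := ln_le_sub1 y0.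
have yi0 : 0 < y^-1 by rewrite invr_gt0.
have h2 := ln_le_sub1 yi0.
rewrite lnV ?posrE // in h2.
have e : y^-1 * y = 1 by rewrite mulVf // gt_eqF.
have -> : (y - 1) ^+ 2 / y = (y - 1) - (1 - y^-1).
  by rewrite -[LHS]mulr1 -e; field; rewrite gt_eqF.
rewrite ler_norml; apply/andP; split; nra.
Qed.

Lemma exp_bound (R : realType) (x D : R) : `|x| <= D ->
  0 <= expR x - 1 - x <= expR D * x ^+ 2.
Proof.
move=> hx.
have h1 := expR_ge1Dx x.
have h0 := expR_gt0 x.
have h2 := expR_ge1Dx (- x); rewrite expRN in h2.
have h2' : (1 - x) * expR x <= 1.
  by move: (ler_wpM2r (ltW h0) h2); rewrite mulVf // gt_eqF.
have h3 : expR x <= expR D.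
  by rewrite ler_expR; apply: le_trans hx; exact: ler_norm.
have D0 : 0 <= D by apply: le_trans hx.
have h4 : 1 <= expR D by have := expR_ge1Dx D; lra.
apply/andP; split; first lra.
case: (lerP 0 x) => hs.
  nra.
nra.
Qed.
Arguments exp_bound {R x D}. Arguments ln_bound {R y}.

Theorem theorem3p1 (R : realType) (C : R) (hC : 0 < C) :
  exists C' : R, 0 < C' /\
    forall (n : nat) (P : 'M[R]_n) (w v : 'I_n -> R),
      (1 <= n)%N ->
      (forall i j, 0 <= P i j) ->
      (forall i, `|w i| <= C / Num.sqrt n%:R) ->
      (forall j, `|v j| <= C / Num.sqrt n%:R) ->
      `|Lwv P w v - Lapprox P w v| <= C' / n%:R.
Proof.
set D := C ^+ 2.
have D0 : 0 < D by rewrite /D exprn_gt0.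
set M := expR D.
have M1 : 1 <= M by have := expR_ge1Dx D; rewrite /M; lra.
set K := M * (D + M * D ^+ 2) ^+ 2 + M * D ^+ 2.
have M0 : 0 <= M by lra.
have K0 : 0 <= K by rewrite /K addr_ge0 // mulr_ge0 // ?sqr_ge0 // exprn_ge0 // ltW.
exists (K + D ^+ 2 / 2 + 1); split; first by nra.
move=> n P w v n1 P0 hw hv.
set N : R := n%:R.
have N1 : 1 <= N by rewrite /N ler1n.
have N0 : 0 < N by lra.
set s := Num.sqrt N.
have s0 : 0 < s by rewrite /s sqrtr_gt0.
have ss : s ^+ 2 = N by rewrite /s sqr_sqrtr // ltW.
have hx : forall i j, `|w i * v j| <= D / N.
  move=> i j; rewrite normrM.
  have := ler_pM (normr_ge0 _) (normr_ge0 _) (hw i) (hv j).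
  suff -> : C / s * (C / s) = D / N by [].
  by rewrite /D -ss; field; rewrite gt_eqF.
have hDN : D / N <= D.
  by rewrite ler_pdivrMr //; nra.
have hx2 : forall i j, (w i * v j) ^+ 2 <= (D / N) ^+ 2.
  move=> i j; have := hx i j; rewrite ler_norml => /andP[a b].
  have : 0 <= D / N by rewrite divr_ge0 // ltW.
  nra.
set S := \sum_(j < n) v j.
have hS : `|S| <= N * (C / s).
  apply: le_trans (ler_norm_sum _ _ _) _.
  have : \sum_(j < n) `|v j| <= \sum_(j < n) (C / s) by apply: ler_sum => j _; exact: hv.
  by rewrite sumr_const card_ord -mulr_natl.
have hwS : forall i, `|w i * S| <= D.
  move=> i; rewrite normrM.
  have := ler_pM (normr_ge0 _) (normr_ge0 _) (hw i) hS.
  suff -> : C / s * (N * (C / s)) = D by [].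
  by rewrite /D -ss; field; rewrite gt_eqF.
have key : forall i, `|ln (\sum_(j < n) expR (w i * v j)) - ln N - w i * S / N|
    <= K / N ^+ 2.
  move=> i.
  set E := \sum_(j < n) expR (w i * v j).
  set r := E - N - w i * S.
  have rE : r = \sum_(j < n) (expR (w i * v j) - 1 - w i * v j).
    by rewrite /r /E /S !sumrB sumr_const card_ord mulr_sumr.
  have hr0 : 0 <= r.
    rewrite rE; apply: sumr_ge0 => j _.
    by case/andP: (exp_bound (le_trans (hx i j) hDN)).
  have hr1 : r <= M * D ^+ 2 / N.
    rewrite rE.
    have : \sum_(j < n) (expR (w i * v j) - 1 - w i * v j) <= \sum_(j < n) (M * (D / N) ^+ 2).
      apply: ler_sum => j _.
      case/andP: (exp_bound (le_trans (hx i j) hDN)) => _ h.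
      apply: le_trans h _; rewrite ler_wpM2l //.
    rewrite sumr_const card_ord -mulr_natl -/N.
    suff -> : N * (M * (D / N) ^+ 2) = M * D ^+ 2 / N by [].
    by field; rewrite gt_eqF.
  have hE : N / M <= E.
    have : \sum_(j < n) M^-1 <= E.
      rewrite /E; apply: ler_sum => j _.
      rewrite /M -expRN ler_expR.
      have := le_trans (hx i j) hDN; rewrite ler_norml => /andP[a _]; exact: a.
    by rewrite sumr_const card_ord -mulr_natl.
  have E0 : 0 < E by apply: lt_le_trans hE; rewrite divr_gt0 //; lra.
  set y := E / N.
  have y0 : 0 < y by rewrite divr_gt0.
  have yM : y^-1 <= M.
    rewrite invf_ple ?posrE //; last lra.
    by rewrite /y ler_pdivlMr // mulrC.
  have Ey : E = N * y by rewrite /y mulrCA mulfV ?mulr1 // gt_eqF.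
  have lnE : ln E = ln N + ln y by rewrite Ey lnM ?posrE.
  rewrite lnE.
  set u := N^-1.
  have u0 : 0 < u by rewrite invr_gt0.
  set t := w i * S + r.
  have y1 : y - 1 = t * u by rewrite /y /t /r /u; field; rewrite gt_eqF.
  set B := D + M * D ^+ 2.
  have ht : `|t| <= B.
    have : M * D ^+ 2 / N <= M * D ^+ 2.
      rewrite ler_pdivrMr //; have : 0 <= M * D ^+ 2 by rewrite mulr_ge0 // sqr_ge0.
      nra.
    have := hwS i; rewrite /t /B => h1 h2.
    apply: le_trans (ler_normD _ _) _; rewrite (ger0_norm hr0); lra.
  have ht2 : t ^+ 2 <= B ^+ 2.
    move: ht; rewrite ler_norml => /andP[a b]; nra.
  have hlb := ln_bound y0.
  have h1 : `|ln y - (y - 1)| <= M * (B ^+ 2 * u ^+ 2).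
    apply: le_trans hlb _; rewrite y1.
    rewrite mulrC; apply: ler_pM => //; first by rewrite invr_ge0 ltW.
      by rewrite sqr_ge0.
    rewrite exprMn; apply: ler_wpM2r => //; by rewrite sqr_ge0.
  have h3 : r * u <= M * D ^+ 2 * u ^+ 2.
    move: (ler_wpM2r (ltW u0) hr1) => h; apply: (le_trans h); rewrite le_eqVlt; apply/orP; left; apply/eqP; rewrite /u; field; by rewrite gt_eqF.
  have -> : ln N + ln y - ln N - w i * S * u = (ln y - (y - 1)) + r * u.
    by rewrite y1 /t; ring.
  apply: le_trans (ler_normD _ _) _.
  rewrite (ger0_norm (mulr_ge0 hr0 (ltW u0))).
  have -> : K / N ^+ 2 = M * (B ^+ 2 * u ^+ 2) + M * D ^+ 2 * u ^+ 2.
    by rewrite /K /B /u; field; rewrite gt_eqF.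
  lra.
set Q := \sum_(i < n) \sum_(j < n) (w i ^+ 2 * v j ^+ 2) / 2.
have eq : Lwv P w v - Lapprox P w v =
   - (\sum_(i < n) (ln (\sum_(j < n) expR (w i * v j)) - ln N - w i * S / N)) + N^-1 * Q.
  rewrite /Lwv /Lapprox -/N -/S -/Q !sumrB sumr_const card_ord -mulr_natl -!mulr_suml.
  rewrite -/N; set I1 := inner_Pv P w v; set L1 := \sum_(i < n) ln _; set W := \sum_(i < n) w i.
  clearbody I1 L1 W Q S N.
  ring.
have hQ : 0 <= Q <= D ^+ 2 / 2.
  have : Q <= \sum_(i < n) \sum_(j < n) ((D / N) ^+ 2 / 2).
    apply: ler_sum => i _; apply: ler_sum => j _.
    rewrite -exprMn; apply: ler_wpM2r; [by rewrite invr_ge0 | exact: hx2].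
  have -> : \sum_(i < n) \sum_(j < n) ((D / N) ^+ 2 / 2) = N * (N * ((D / N) ^+ 2 / 2)).
    by rewrite !sumr_const !card_ord /N !mulr_natl.
  move=> hQ1.
  apply/andP; split.
    by apply: sumr_ge0 => i _; apply: sumr_ge0 => j _; rewrite divr_ge0 // mulr_ge0 // sqr_ge0.
  apply: le_trans hQ1 _; rewrite le_eqVlt; apply/orP; left; apply/eqP.
  by field; rewrite gt_eqF.
have hA : `|\sum_(i < n) (ln (\sum_(j < n) expR (w i * v j)) - ln N - w i * S / N)| <= K / N.
  apply: le_trans (ler_norm_sum _ _ _) _.
  have : \sum_(i < n) `|ln (\sum_(j < n) expR (w i * v j)) - ln N - w i * S / N| <= \sum_(i < n) (K / N ^+ 2).
    by apply: ler_sum => i _; exact: key.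
  have -> : \sum_(i < n) (K / N ^+ 2) = N * (K / N ^+ 2).
    by rewrite sumr_const card_ord /N mulr_natl.
  move=> h; apply: le_trans h _.
  rewrite le_eqVlt; apply/orP; left; apply/eqP.
  by field; rewrite gt_eqF.
rewrite eq; apply: le_trans (ler_normD _ _) _.
rewrite normrN [X in _ + X]ger0_norm; last first.
  by apply: mulr_ge0; [rewrite invr_ge0 ltW | case/andP: hQ].
have : N^-1 * Q <= N^-1 * (D ^+ 2 / 2) by apply: ler_wpM2l; [rewrite invr_ge0 ltW | case/andP: hQ].
have -> : (K + D ^+ 2 / 2 + 1) / N = K / N + N^-1 * (D ^+ 2 / 2) + N^-1.
  by field; rewrite gt_eqF.
have : 0 < N^-1 by rewrite invr_gt0.
lra.
Qed.
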